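(* Let $G=(m,n,\boldsymbol{c},\boldsymbol{d},r_{\max},r_{\min})$ be an interbank lending game, let $\alpha\in(0,1]$, and let $\boldsymbol{s}^1\in\boldsymbol{S}$ be any initial strategy profile. Then the randomised $\alpha$-uniform best-response dynamics $(\boldsymbol{s}^t)_{t\in\mathbb{N}}$ started at $\boldsymbol{s}^1$ converges almost surely to the unique pure Nash equilibrium $\boldsymbol{s}^*$ of $G$.
   Context: An interbank lending game $G=(m,n,\boldsymbol{c},\boldsymbol{d},r_{\max},r_{\min})$ consists of positive integers $m,n$, budgets $\boldsymbol{c}\in\mathbb{R}_{>0}^m$, demands $\boldsymbol{d}\in\mathbb{R}_{>0}^n$ and reals $0<r_{\min}<r_{\max}$. The players are the lenders $L=\{1,\dots,m\}$; $B=\{1,\dots,n\}$ is the set of borrowers. Lender $i$'s strategy set is $S_i=\{s_i\in\mathbb{R}_{\ge0}^n:\sum_{j\in B}s_{ij}\le c_i\}$, the strategy space is $\boldsymbol{S}=\prod_{i\in L}S_i$ with elements $\boldsymbol{s}=(s_{ij})$. The interest rate of borrower $j$ is $r_j(\boldsymbol{s})=(r_{\min}-r_{\max})\frac{\sum_{i\in L}s_{ij}}{d_j}+r_{\max}$ and lender $i$'s utility is $u_i(\boldsymbol{s})=\sum_{j\in B}(r_j(\boldsymbol{s})-r_{\min})s_{ij}$. A pure Nash equilibrium is $\boldsymbol{s}^*\in\boldsymbol{S}$ with $u_i(\boldsymbol{s}^* )\ge u_i(s_i,\boldsymbol{s}^*_{-i})$ for all $i\in L$, $s_i\in S_i$;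 $G$ has exactly one. For $\boldsymbol{s}\in\boldsymbol{S}$, lender $i$'s best-response set is $\mathrm{BR}_i(\boldsymbol{s})=\arg\max\{u_i(z_i,\boldsymbol{s}_{-i}):z_i\in S_i\}$. In the randomised $\alpha$-uniform best-response dynamics, at each time step $t$ the updating lender $i^t\in L$ is drawn at random according to a given probability distribution $\pi^t$ on $L$ (independently of the earlier draws), where there is a constant $p_{\min}>0$ with $\pi^t(i)\ge p_{\min}$ for all $t$ and all $i\in L$; then $\boldsymbol{s}^{t+1}=(s^{t+1}_{i^t},\boldsymbol{s}^t_{-i^t})$ with $s^{t+1}_{i^t}=s^t_{i^t}+\alpha(\hat s^t_{i^t}-s^t_{i^t})$ for some $\hat s^t_{i^t}\in\mathrm{BR}_{i^t}(\boldsymbol{s}^t)$. Convergence means $\boldsymbol{s}^t\to\boldsymbol{s}^*$ as $t\to\infty$. *)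

(* Defs.v *)
From HB Require Import structures.
From mathcomp Require Import all_boot all_order all_algebra.
From mathcomp Require Import all_classical all_reals all_analysis.
Set Implicit Arguments. Unset Strict Implicit. Unset Printing Implicit Defensive.
Import Order.TTheory GRing.Theory Num.Theory.
Import numFieldNormedType.Exports.
Local Open Scope classical_set_scope.
Local Open Scope ring_scope.

Section Game.
Variables (R : realType) (m n : nat).
Variables (c : 'I_m -> R) (d : 'I_n -> R) (rmax rmin : R).

Definition in_strat (i : 'I_m) (z : 'I_n -> R) : Prop :=
  (forall j, 0 <= z j) /\ \sum_(j < n) z j <= c i.

Definition in_profile (s : 'M[R]_(m, n)) : Prop :=
  forall i, in_strat i (fun j => s i j).

Definition rate (s : 'M[R]_(m, n)) (j : 'I_n) : R :=
  (rmin - rmax) * ((\sum_(i < m) s i j) / d j) + rmax.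

Definition util (i : 'I_m) (s : 'M[R]_(m, n)) : R :=
  \sum_(j < n) (rate s j - rmin) * s i j.

Definition replace_row (s : 'M[R]_(m, n)) (i : 'I_m) (z : 'I_n -> R)
  : 'M[R]_(m, n) :=
  \matrix_(k, j) (if k == i then z j else s k j).

Definition is_best_response (i : 'I_m) (s : 'M[R]_(m, n)) (z : 'I_n -> R) : Prop :=
  in_strat i z /\
  forall z', in_strat i z' -> util i (replace_row s i z') <= util i (replace_row s i z).

Definition is_pure_NE (s : 'M[R]_(m, n)) : Prop :=
  in_profile s /\
  forall i z, in_strat i z -> util i (replace_row s i z) <= util i s.

Definition alpha_update (alpha : R) (s : 'M[R]_(m, n)) (i : 'I_m) (shat : 'I_n -> R)
  : 'M[R]_(m, n) :=
  replace_row s i (fun j => s i j + alpha * (shat j - s i j)).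

End Game.

(* Main.v *)
Require Import Defs.
From HB Require Import structures.
From mathcomp Require Import all_boot all_order all_algebra.
From mathcomp Require Import all_classical all_reals all_analysis.
From mathcomp Require Import ring lra.
Set Implicit Arguments. Unset Strict Implicit. Unset Printing Implicit Defensive.
Import Order.TTheory GRing.Theory Num.Theory.
Import numFieldNormedType.Exports.
Local Open Scope classical_set_scope.
Local Open Scope ring_scope.

Section Alg.
Variables (R : realType) (m n : nat).
Variables (c : 'I_m -> R) (d : 'I_n -> R) (rmax rmin : R).
Hypothesis hd : forall j, 0 < d j.
Hypothesis hr : rmin < rmax.

Definition bb := rmax - rmin.
Definition aa (j : 'I_n) := bb / d j.
Definition colsum (s : 'M[R]_(m, n)) j := \sum_(k < m) s k j.
Definition GG (s : 'M[R]_(m, n)) k j := bb - aa j * (colsum s j + s k j).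
Definition Phi (s : 'M[R]_(m, n)) :=
  \sum_(j < n) (bb * colsum s j - aa j / 2 * (colsum s j ^+ 2 + \sum_(k < m) s k j ^+ 2)).
Definition Qf (e : 'M[R]_(m, n)) :=
  \sum_(j < n) aa j / 2 * (colsum e j ^+ 2 + \sum_(k < m) e k j ^+ 2).
Definition GL (s : 'M[R]_(m, n)) i (x : 'I_n -> R) := \sum_(j < n) GG s i j * x j.
Definition QL (x : 'I_n -> R) := \sum_(j < n) aa j * x j ^+ 2.
Definition RF s i x := GL s i x - QL x.

Lemma bb_gt0 : 0 < bb. Proof. by rewrite /bb subr_gt0. Qed.
Lemma aa_gt0 j : 0 < aa j. Proof. by rewrite /aa divr_gt0 // ?bb_gt0. Qed.

Lemma sum_sq_add (p : nat) (x y : 'I_p -> R) :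
  \sum_(i < p) (x i + y i) ^+ 2 = \sum_(i < p) x i ^+ 2 + 2 * \sum_(i < p) x i * y i + \sum_(i < p) y i ^+ 2.
Proof.
rewrite mulr_sumr -!big_split /=; apply: eq_bigr => i _; ring.
Qed.

Lemma sum_lin (p : nat) (F G : 'I_p -> R) (A B C : R) :
  \sum_(k < p) (A - B * (C + F k)) * G k = A * \sum_(k < p) G k - B * C * \sum_(k < p) G k - B * \sum_(k < p) F k * G k.
Proof. rewrite !mulr_sumr -!sumrB; apply: eq_bigr => k _; ring. Qed.

Lemma Phi_add s e : Phi (s + e) = Phi s + \sum_(k < m) GL s k (fun j => e k j) - Qf e.
Proof.
rewrite /Phi /Qf /GL exchange_big /= -big_split -sumrB /=.
apply: eq_bigr => j _.
have -> : colsum (s + e) j = colsum s j + colsum e j.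
  by rewrite /colsum -big_split; apply: eq_bigr => k _; rewrite mxE.
have -> : \sum_(k < m) (s + e) k j ^+ 2 = \sum_(k < m) (s k j + e k j) ^+ 2.
  by apply: eq_bigr => k _; rewrite mxE.
rewrite sum_sq_add.
have -> : \sum_(k < m) GG s k j * e k j =
   bb * colsum e j - aa j * colsum s j * colsum e j - aa j * \sum_(k < m) s k j * e k j.
  by rewrite /GG sum_lin -/(colsum e j).
by field.
Qed.

Lemma rate_sub s j : rate d rmax rmin s j - rmin = bb - aa j * colsum s j.
Proof. rewrite /rate /aa /bb /colsum; ring. Qed.

Lemma colsum_replace s i z j :
  colsum (replace_row s i z) j = colsum s j + (z j - s i j).
Proof.
rewrite /colsum (bigD1 i) //= [in RHS](bigD1 i) //= !mxE eqxx.
have -> : \sum_(k < m | k != i) (replace_row s i z) k j = \sum_(k < m | k != i) s k j.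
  by apply: eq_bigr => k /negbTE kn; rewrite mxE kn.
ring.
Qed.

Lemma util_replace s i z :
  util d rmax rmin i (replace_row s i z) - util d rmax rmin i s =
  RF s i (fun j => z j - s i j).
Proof.
rewrite /util /RF /GL /QL -!sumrB; apply: eq_bigr => j _.
rewrite !rate_sub colsum_replace !mxE eqxx /GG; ring.
Qed.

Lemma Phi_replace s i z :
  Phi (replace_row s i z) - Phi s = RF s i (fun j => z j - s i j).
Proof.
have -> : replace_row s i z = s + \matrix_(k, j) (if k == i then z j - s i j else 0).
  by apply/matrixP => k j; rewrite !mxE; case: eqP => [->|]; [ring|rewrite addr0].
rewrite Phi_add /RF.
have -> : \sum_(k < m) GL s k (fun j => (\matrix_(k0, j0) (if k0 == i then z j0 - s i j0 else 0)) k j)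
   = GL s i (fun j => z j - s i j).
  rewrite (bigD1 i) //= big1 ?addr0.
    by apply: eq_bigr => j _; rewrite mxE eqxx.
  move=> k /negbTE kn; rewrite /GL big1 // => j _; rewrite mxE kn mulr0 //.
have -> : Qf (\matrix_(k, j) (if k == i then z j - s i j else 0)) = QL (fun j => z j - s i j).
  rewrite /Qf /QL; apply: eq_bigr => j _.
  have E : forall F : R -> R, F 0 = 0 ->
     \sum_(k < m) F ((\matrix_(k0, j0) (if k0 == i then z j0 - s i j0 else 0)) k j) = F (z j - s i j).
    move=> F F0; rewrite (bigD1 i) //= big1 ?addr0; first by rewrite mxE eqxx.
    by move=> k /negbTE kn; rewrite mxE kn.
  rewrite /colsum (E id) // (E (fun x => x ^+ 2)) ?expr0n //; by field.
ring.
Qed.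


Lemma QL_ge0 (x : 'I_n -> R) : 0 <= QL x.
Proof. by apply: sumr_ge0 => j _; rewrite mulr_ge0 // ?sqr_ge0 // ltW // aa_gt0. Qed.

Lemma RF_scale s i t (x : 'I_n -> R) :
  RF s i (fun j => t * x j) = t * GL s i x - t ^+ 2 * QL x.
Proof.
rewrite /RF /GL /QL !mulr_sumr; congr (_ - _); apply: eq_bigr => j _; ring.
Qed.

Lemma strat_le_c i (z : 'I_n -> R) : in_strat c i z -> forall j, z j <= c i.
Proof.
move=> [z0 zc] j; apply: le_trans zc.
rewrite (bigD1 j) //= lerDl; exact: sumr_ge0.
Qed.
Arguments strat_le_c [i z].

Lemma strat_conv i (x y : 'I_n -> R) t : in_strat c i x -> in_strat c i y -> 0 <= t <= 1 ->
  in_strat c i (fun j => x j + t * (y j - x j)).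
Proof.
move=> [x0 xc] [y0 yc] /andP[t0 t1]; split.
  move=> j; have := x0 j; have := y0 j; nra.
have -> : \sum_(j < n) (x j + t * (y j - x j)) =
   (1 - t) * \sum_(j < n) x j + t * \sum_(j < n) y j.
  rewrite !mulr_sumr -big_split /=; apply: eq_bigr => j _; ring.
nra.
Qed.
Arguments strat_conv [i x y t].

Lemma br_RF i s (shat z : 'I_n -> R) : is_best_response c d rmax rmin i s shat -> in_strat c i z ->
  RF s i (fun j => z j - s i j) <= RF s i (fun j => shat j - s i j).
Proof.
move=> [_ H] zS; rewrite -!util_replace lerD2r; exact: H.
Qed.
Arguments br_RF [i s shat z].

Lemma RF_mid s i (x y : 'I_n -> R) :
  RF s i (fun j => (x j + y j) / 2) - (RF s i x + RF s i y) / 2 =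
  \sum_(j < n) aa j / 4 * (x j - y j) ^+ 2.
Proof.
rewrite /RF /GL /QL -!sumrB -big_split /= mulr_suml.
rewrite -sumrB; apply: eq_bigr => j _; by field.
Qed.

Lemma br_unique i (s : 'M[R]_(m, n)) (z1 z2 : 'I_n -> R) :
  is_best_response c d rmax rmin i s z1 -> is_best_response c d rmax rmin i s z2 ->
  z1 = z2.
Proof.
move=> B1 B2.
have H12 := br_RF B1 B2.1.
have H21 := br_RF B2 B1.1.
have Hm : in_strat c i (fun j => z1 j + (1/2) * (z2 j - z1 j)).
  by apply: strat_conv; [exact: B1.1|exact: B2.1|lra].
have H3 := br_RF B1 Hm.
have E : RF s i (fun j => z1 j + 1 / 2 * (z2 j - z1 j) - s i j) -
   (RF s i (fun j => z1 j - s i j) + RF s i (fun j => z2 j - s i j)) / 2 =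
   \sum_(j < n) aa j / 4 * ((z1 j - s i j) - (z2 j - s i j)) ^+ 2.
  rewrite -(RF_mid s i (fun j => z1 j - s i j) (fun j => z2 j - s i j)).
  by congr (RF s i _ - _); apply: funext => j; field.
have Hs : \sum_(j < n) aa j / 4 * ((z1 j - s i j) - (z2 j - s i j)) ^+ 2 <= 0 by lra.
have F0 : forall k, 0 <= aa k / 4 * ((z1 k - s i k) - (z2 k - s i k)) ^+ 2.
  by move=> k; rewrite mulr_ge0 ?sqr_ge0 // divr_ge0 // ltW // aa_gt0.
have Hz : forall j, aa j / 4 * ((z1 j - s i j) - (z2 j - s i j)) ^+ 2 = 0.
  move=> j; apply: (@psumr_eq0P _ _ predT (fun k => aa k / 4 * ((z1 k - s i k) - (z2 k - s i k)) ^+ 2) (fun k _ => F0 k)) => //.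
  by apply/eqP; rewrite eq_le Hs /=; apply: sumr_ge0 => k _; exact: F0.
apply: funext => j; have := Hz j; move/eqP; rewrite mulf_eq0 sqrf_eq0.
have -> : (aa j / 4 == 0) = false by apply/negbTE; rewrite gt_eqF // divr_gt0 // aa_gt0.
by move/eqP => /= H; lra.
Qed.


Lemma in_strat_ext i (x y : 'I_n -> R) : (forall j, x j = y j) -> in_strat c i x -> in_strat c i y.
Proof. by move=> E; have -> : y = x by apply/funext => j; rewrite E. Qed.
Arguments in_strat_ext [i x y].

Lemma profile_update al (s : 'M[R]_(m, n)) i shat :
  in_profile c s -> is_best_response c d rmax rmin i s shat -> 0 <= al <= 1 ->
  in_profile c (alpha_update al s i shat).
Proof.
move=> Hs B Ha k; rewrite /alpha_update /replace_row.
case: (eqVneq k i) => [->|ki].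
  apply: (in_strat_ext _ (strat_conv (Hs i) B.1 Ha)) => j; by rewrite mxE eqxx.
apply: (in_strat_ext _ (Hs k)) => j; by rewrite mxE (negbTE ki).
Qed.

Lemma update_gain al (s : 'M[R]_(m, n)) i shat :
  0 <= al <= 1 ->
  al * RF s i (fun j => shat j - s i j) <= Phi (alpha_update al s i shat) - Phi s.
Proof.
move=> /andP[a0 a1]; rewrite /alpha_update Phi_replace.
have -> : (fun j => s i j + al * (shat j - s i j) - s i j) = (fun j => al * (shat j - s i j)).
  by apply/funext => j; ring.
rewrite RF_scale /RF.
have h1 : 0 <= 1 - al by lra.
have := mulr_ge0 (mulr_ge0 a0 h1) (QL_ge0 (fun j => shat j - s i j)).
rewrite expr2; lra.
Qed.

Lemma RF_zero (s : 'M[R]_(m, n)) i : RF s i (fun j => s i j - s i j) = 0.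
Proof.
have -> : (fun j => s i j - s i j) = (fun j => 0 * 1) by apply/funext => j; ring.
by rewrite (RF_scale s i 0 (fun _ => 1)); ring.
Qed.

Lemma RF_br_ge0 (s : 'M[R]_(m, n)) i shat :
  in_strat c i (fun j => s i j) -> is_best_response c d rmax rmin i s shat ->
  0 <= RF s i (fun j => shat j - s i j).
Proof. by move=> Si B; rewrite -(RF_zero s i); exact: br_RF B Si. Qed.

Lemma RF_cand (s sstar : 'M[R]_(m, n)) i shat t :
  in_strat c i (fun j => s i j) -> in_strat c i (fun j => sstar i j) ->
  is_best_response c d rmax rmin i s shat -> 0 <= t <= 1 ->
  t * GL s i (fun j => sstar i j - s i j) - t ^+ 2 * QL (fun j => sstar i j - s i j)
  <= RF s i (fun j => shat j - s i j).
Proof.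
move=> Si Ssi B Ht.
have := br_RF B (strat_conv Si Ssi Ht).
have -> : (fun j => s i j + t * (sstar i j - s i j) - s i j) = (fun j => t * (sstar i j - s i j)).
  by apply/funext => j; ring.
by rewrite RF_scale.
Qed.

Lemma quad_nonpos (g q : R) : 0 <= q ->
  (forall t, 0 < t <= 1 -> t * g - t ^+ 2 * q <= 0) -> g <= 0.
Proof.
move=> q0 H; rewrite leNgt; apply/negP => g0.
have gq : 0 < g + q by lra.
set t := g / (g + q).
have tE : t * (g + q) = g by rewrite /t divfK // gt_eqF.
have t0 : 0 < t by rewrite /t divr_gt0.
have t1 : t <= 1 by nra.
have h4 := H t (andb_true_intro (conj t0 t1)).
have h2 : t * (t * (g + q)) = t * g by rewrite tE.
have h3 : 0 < t * (t * g) by apply: mulr_gt0 => //; apply: mulr_gt0.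
rewrite expr2 in h4; lra.
Qed.

Lemma NE_GL (sstar s : 'M[R]_(m, n)) i :
  is_pure_NE c d rmax rmin sstar -> in_profile c s ->
  GL sstar i (fun j => s i j - sstar i j) <= 0.
Proof.
move=> [Hp HN] Hs.
apply: (quad_nonpos (QL_ge0 (fun j => s i j - sstar i j))) => t /andP[t0 t1].
have Z := strat_conv (Hp i) (Hs i) (andb_true_intro (conj (ltW t0) t1)).
have := HN i _ Z; rewrite -subr_le0 util_replace.
have -> : (fun j => sstar i j + t * (s i j - sstar i j) - sstar i j) = (fun j => t * (s i j - sstar i j)).
  by apply/funext => j; ring.
by rewrite RF_scale.
Qed.

Lemma Qf_ge0 (e : 'M[R]_(m, n)) : 0 <= Qf e.
Proof.
apply: sumr_ge0 => j _; apply: mulr_ge0; first by rewrite divr_ge0 // ltW // aa_gt0.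
by apply: addr_ge0; rewrite ?sqr_ge0 //; apply: sumr_ge0 => k _; rewrite sqr_ge0.
Qed.

Lemma Qf_entry (e : 'M[R]_(m, n)) k j : aa j / 2 * e k j ^+ 2 <= Qf e.
Proof.
rewrite /Qf (bigD1 j) //=.
have r0 : 0 <= \sum_(j' < n | j' != j) aa j' / 2 * (colsum e j' ^+ 2 + \sum_(k0 < m) e k0 j' ^+ 2).
  apply: sumr_ge0 => j' _; apply: mulr_ge0; first by rewrite divr_ge0 // ltW // aa_gt0.
  by apply: addr_ge0; rewrite ?sqr_ge0 //; apply: sumr_ge0 => k' _; rewrite sqr_ge0.
have h1 : e k j ^+ 2 <= \sum_(k0 < m) e k0 j ^+ 2.
  by rewrite (bigD1 k) //= lerDl sumr_ge0 // => k' _; rewrite sqr_ge0.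
have a0 : 0 < aa j / 2 by rewrite divr_gt0 // aa_gt0.
have := sqr_ge0 (colsum e j).
nra.
Qed.

Lemma V_ge_Qf (sstar s : 'M[R]_(m, n)) :
  is_pure_NE c d rmax rmin sstar -> in_profile c s ->
  Qf (s - sstar) <= Phi sstar - Phi s.
Proof.
move=> HN Hs.
have := Phi_add sstar (s - sstar); rewrite addrC subrK => ->.
have : \sum_(k < m) GL sstar k (fun j => (s - sstar) k j) <= 0.
  apply: sumr_le0 => k _.
  have -> : (fun j => (s - sstar) k j) = (fun j => s k j - sstar k j).
    by apply/funext => j; rewrite !mxE.
  exact: NE_GL.
lra.
Qed.

Lemma V_le_GL (sstar s : 'M[R]_(m, n)) :
  Phi sstar - Phi s <= \sum_(k < m) GL s k (fun j => sstar k j - s k j).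
Proof.
have := Phi_add s (sstar - s); rewrite addrC subrK => ->.
have -> : \sum_(k < m) GL s k (fun j => (sstar - s) k j) = \sum_(k < m) GL s k (fun j => sstar k j - s k j).
  by apply: eq_bigr => k _; congr GL; apply/funext => j; rewrite !mxE.
have := Qf_ge0 (sstar - s); lra.
Qed.

Definition Dc := \sum_(k < m) \sum_(j < n) aa j * c k ^+ 2.

Lemma QL_bound i (x y : 'I_n -> R) : in_strat c i x -> in_strat c i y ->
  QL (fun j => y j - x j) <= Dc.
Proof.
move=> Sx Sy.
have h : QL (fun j => y j - x j) <= \sum_(j < n) aa j * c i ^+ 2.
  apply: ler_sum => j _.
  have h1 := strat_le_c Sx j; have h2 := strat_le_c Sy j; have h3 := Sx.1 j; have h4 := Sy.1 j.
  apply: ler_wpM2l; first exact: ltW (aa_gt0 j).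
  have h5 : 0 <= c i - y j + x j by lra.
  have h6 : 0 <= c i + y j - x j by lra.
  have := mulr_ge0 h5 h6; rewrite !expr2; lra.
apply: le_trans h _; rewrite /Dc (bigD1 i) //= lerDl.
apply: sumr_ge0 => k _; apply: sumr_ge0 => j _; apply: mulr_ge0; [exact: ltW (aa_gt0 j) | exact: sqr_ge0].
Qed.

Lemma Dc_ge0 : 0 <= Dc.
Proof. apply: sumr_ge0 => k _; apply: sumr_ge0 => j _; apply: mulr_ge0; [exact: ltW (aa_gt0 j) | exact: sqr_ge0]. Qed.

End Alg.

Lemma cvg_entries (R : realType) m n (u : nat -> 'M[R]_(m,n)) (L : 'M[R]_(m,n)) :
  (forall e : R, 0 < e -> forall i j, \forall t \near \oo, `|L i j - u t i j| < e) ->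
  u @ \oo --> L.
Proof.
move=> H; apply/cvgrPdist_lt => e e0.
have H2 : forall ij : 'I_m * 'I_n, \forall t \near \oo, `|L ij.1 ij.2 - u t ij.1 ij.2| < e.
  by move=> [i j]; exact: H.
apply: (filterS _ (@filter_forall _ _ _ \oo _ H2)) => t Ht.
rewrite [X in X < _]/Num.Def.normr /= mx_normrE.
apply: bigmax_lt => //= ij _.
by rewrite !mxE.
Qed.

Section Det.
Variables (R : realType) (m n : nat).
Variables (c : 'I_m -> R) (d : 'I_n -> R) (rmax rmin : R).
Hypothesis hm : (0 < m)%N.
Hypothesis hd : forall j, 0 < d j.
Hypothesis hr : rmin < rmax.
Variables (al : R) (ha0 : 0 < al) (ha1 : al <= 1).
Variables (sstar : 'M[R]_(m, n)) (hstar : is_pure_NE c d rmax rmin sstar).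
Variables (u : nat -> 'M[R]_(m, n)) (ii : nat -> 'I_m) (gp : 'M[R]_(m, n) -> 'I_m).
Hypothesis hu0 : in_profile c (u 0).
Hypothesis hstep : forall t, exists shat, is_best_response c d rmax rmin (ii t) (u t) shat /\
   u t.+1 = alpha_update al (u t) (ii t) shat.
Hypothesis hgp : forall s, \sum_(k < m) GL d rmax rmin s k (fun j => sstar k j - s k j) <=
   m%:R * GL d rmax rmin s (gp s) (fun j => sstar (gp s) j - s (gp s) j).
Hypothesis hinf : forall N, exists t, (N <= t)%N /\ ii t = gp (u t).

Let V t := Phi d rmax rmin sstar - Phi d rmax rmin (u t).

Lemma prof t : in_profile c (u t).
Proof.
elim: t => [//|t IH].
have [shat [B ->]] := hstep t.
apply: (profile_update IH B); apply/andP; split; [exact: ltW ha0 | exact: ha1].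
Qed.

Lemma Vstep t : V t.+1 <= V t.
Proof.
have [shat [B E]] := hstep t.
have h1 := update_gain hd hr (u t) (ii t) shat (andb_true_intro (conj (ltW ha0) ha1)).
have h2 := RF_br_ge0 (prof t (ii t)) B.
rewrite /V E; have := mulr_ge0 (ltW ha0) h2; lra.
Qed.

Lemma Vmono k t : V (t + k) <= V t.
Proof.
elim: k => [|k IH]; first by rewrite addn0.
by rewrite addnS; apply: le_trans (Vstep _) IH.
Qed.

Lemma V_ge0 t : 0 <= V t.
Proof. exact: le_trans (Qf_ge0 hd hr _) (V_ge_Qf hd hr hstar (prof t)). Qed.

Lemma Vgood (eps : R) : 0 < eps ->
  let eta := eps / m%:R in let tau := eta / (eta + 2 * Dc c d rmax rmin) in
  forall t, eps <= V t -> ii t = gp (u t) -> V t.+1 <= V t - al * tau * eta / 2.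
Proof.
move=> e0 eta tau t Vt gt.
have m0 : 0 < (m%:R : R) by rewrite ltr0n.
have eta0 : 0 < eta by rewrite /eta divr_gt0.
have D0 := Dc_ge0 c hd hr.
have etaD : 0 < eta + 2 * Dc c d rmax rmin by lra.
have tauE : tau * (eta + 2 * Dc c d rmax rmin) = eta by rewrite /tau divfK // gt_eqF.
have tau0 : 0 < tau by rewrite /tau divr_gt0.
have tau1 : tau <= 1.
  have : tau * (eta + 2 * Dc c d rmax rmin) <= 1 * (eta + 2 * Dc c d rmax rmin) by rewrite tauE; lra.
  by rewrite ler_pM2r.
have [shat [B E]] := hstep t.
set i := ii t.
set g := GL d rmax rmin (u t) i (fun j => sstar i j - u t i j).
set q := QL d rmax rmin (fun j => sstar i j - u t i j).
have hg : eta <= g.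
  have h1 := V_le_GL hd hr sstar (u t).
  have h2 := hgp (u t); rewrite -gt -/i -/g in h2.
  have : eps <= m%:R * g by rewrite -/(V t) in h1; lra.
  by rewrite /eta ler_pdivrMr // mulrC.
have hq : q <= Dc c d rmax rmin by exact: (QL_bound hd hr (prof t i) (hstar.1 i)).
have h3 := RF_cand (prof t i) (hstar.1 i) B (andb_true_intro (conj (ltW tau0) tau1)).
rewrite -/g -/q in h3.
have h4 := update_gain hd hr (u t) i shat (andb_true_intro (conj (ltW ha0) ha1)).
have h5 : tau * eta / 2 <= tau * g - tau ^+ 2 * q.
  have h6 : tau * Dc c d rmax rmin <= eta / 2.
    have : tau * eta + 2 * (tau * Dc c d rmax rmin) = eta by rewrite -[RHS]tauE; ring.
    have := mulr_ge0 (ltW tau0) (ltW eta0); lra.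
  have h7 : tau * (tau * q) <= tau * (tau * Dc c d rmax rmin).
    by apply: ler_wpM2l; [lra|apply: ler_wpM2l; lra].
  have h8 : tau * eta <= tau * g by apply: ler_wpM2l; lra.
  have h9 : tau * (tau * Dc c d rmax rmin) <= tau * (eta / 2) by apply: ler_wpM2l; lra.
  rewrite expr2; lra.
have h10 : al * (tau * eta / 2) <= al * (tau * g - tau ^+ 2 * q) by apply: ler_wpM2l; [exact: ltW ha0 | lra].
have h11 : al * (tau * g - tau ^+ 2 * q) <= al * RF d rmax rmin (u t) i (fun j => shat j - u t i j).
  by apply: ler_wpM2l; [exact: ltW ha0 | lra].
rewrite /V E; lra.
Qed.

Lemma V_small (eps : R) : 0 < eps -> exists N, V N < eps.
Proof.
move=> e0.
case: (pselect (exists N, V N < eps)) => // H; exfalso.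
have HV : forall N, eps <= V N.
  by move=> N; rewrite leNgt; apply/negP => h; apply: H; exists N.
have := Vgood e0.
set eta := eps / m%:R; set tau := eta / (eta + 2 * Dc c d rmax rmin) => Hg.
have m0 : 0 < (m%:R : R) by rewrite ltr0n.
have eta0 : 0 < eta by rewrite /eta divr_gt0.
have D0 := Dc_ge0 c hd hr.
have tau0 : 0 < tau by rewrite /tau divr_gt0 //; lra.
set del := al * tau * eta / 2.
have del0 : 0 < del by rewrite /del; apply: divr_gt0 => //; apply: mulr_gt0 => //; apply: mulr_gt0.
have claim : forall K : nat, exists t, V t <= V 0 - K%:R * del.
  elim=> [|K [t Ht]]; first by exists 0%N; rewrite mul0r subr0.
  have [t' [tt' gt']] := hinf t.
  exists t'.+1.
  have h1 := Hg t' (HV t') gt'.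
  have h2 : V t' <= V t by rewrite -(subnKC tt') Vmono.
  have -> : (K.+1%:R : R) = K%:R + 1 by rewrite -addn1 natrD.
  rewrite -/tau -/del in h1; rewrite mulrDl mul1r; lra.
have V00 : 0 <= V 0 / del by rewrite divr_ge0 // ?V_ge0 // ltW.
have hK := archi_boundP V00.
set KK := Num.Def.archi_bound _ in hK.
have [t Ht] := claim KK.
have : V 0 < KK%:R * del by rewrite -ltr_pdivrMr.
have := HV t; lra.
Qed.

Lemma det_conv : u @ \oo --> sstar.
Proof.
apply: cvg_entries => e e0 i j.
have a0 := aa_gt0 hd hr j.
have eps0 : 0 < aa d rmax rmin j / 2 * e ^+ 2 by apply: mulr_gt0; [apply: divr_gt0 | apply: exprn_gt0].
have [N HN] := V_small eps0.
exists N => // t /= Nt.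
have h1 : V t <= V N by rewrite -(subnKC Nt) Vmono.
have h2 := Qf_entry hd hr (u t - sstar) i j.
have h3 := V_ge_Qf hd hr hstar (prof t).
rewrite !mxE in h2.
have h4 : (u t i j - sstar i j) ^+ 2 < e ^+ 2.
  have : aa d rmax rmin j / 2 * (u t i j - sstar i j) ^+ 2 < aa d rmax rmin j / 2 * e ^+ 2.
    rewrite /V in HN h1; lra.
  by rewrite ltr_pM2l // divr_gt0.
rewrite ltr_norml; rewrite !expr2 in h4; apply/andP; split; nra.
Qed.

End Det.

Section Prob.
Variables (R : realType) (m n : nat).
Variables (c : 'I_m -> R) (d : 'I_n -> R) (rmax rmin : R).
Hypothesis hm : (0 < m)%N.
Hypothesis hd : forall j, 0 < d j.
Hypothesis hr : rmin < rmax.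
Variables (pmin : R) (hpmin : 0 < pmin) (pi : nat -> 'I_m -> R).
Hypothesis hpi_min : forall t i, pmin <= pi t i.
Hypothesis hpi_sum : forall t, \sum_(i < m) pi t i = 1.
Variables (dT : measure_display) (T : measurableType dT) (P : probability T R).
Variables (I : nat -> T -> 'I_m).
Hypothesis hI_meas : forall t k, measurable (I t @^-1` [set k]).
Hypothesis hI_indep : forall (ts : seq nat) (k : nat -> 'I_m), uniq ts ->
     P (\bigcap_(t in [set` ts]) (I t @^-1` [set k t])) =
     (\prod_(t <- ts) pi t (k t))%:E.

Let i0 : 'I_m := Ordinal hm.

Definition ext (N : nat) (f : {ffun 'I_N -> 'I_m}) (t : nat) : 'I_m :=
  oapp f i0 (insub t : option 'I_N).

Definition Cyl (N : nat) (f : {ffun 'I_N -> 'I_m}) : set T :=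
  \bigcap_(t in [set` iota 0 N]) (I t @^-1` [set ext f t]).

Lemma memI N t : [set` iota 0 N] t -> (t < N)%N.
Proof. by move=> H; have : t \in iota 0 N := H; rewrite mem_iota add0n. Qed.

Lemma Imem N t : (t < N)%N -> [set` iota 0 N] t.
Proof. by move=> H; change (t \in iota 0 N); rewrite mem_iota add0n. Qed.

Lemma ext_val N (f : {ffun 'I_N -> 'I_m}) (t : 'I_N) : ext f t = f t.
Proof. by rewrite /ext valK. Qed.

Lemma Cyl_meas N f : measurable (@Cyl N f).
Proof. by apply: bigcap_measurableType => t _; exact: hI_meas. Qed.

Lemma Cyl_P N f : P (@Cyl N f) = (\prod_(t <- iota 0 N) pi t (ext f t))%:E.
Proof. exact: hI_indep (iota_uniq 0 N). Qed.

Lemma CylP N f w : @Cyl N f w <-> forall t : 'I_N, I t w = f t.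
Proof.
split.
  move=> H t; rewrite -ext_val; apply: H; apply: Imem; exact: ltn_ord.
move=> H t /memI tN.
by have := H (Ordinal tN); rewrite -ext_val.
Qed.

Lemma Cyl_hist N f w w' : @Cyl N f w -> @Cyl N f w' -> forall t, (t < N)%N -> I t w = I t w'.
Proof.
move=> /CylP H /CylP H' t tN.
by have := H (Ordinal tN); have := H' (Ordinal tN) => /= -> ->.
Qed.

Lemma Cyl_self N w : @Cyl N [ffun t : 'I_N => I t w] w.
Proof. by apply/CylP => t; rewrite ffunE. Qed.

Lemma Cyl_disj N f g : f != g -> @Cyl N f `&` @Cyl N g = set0.
Proof.
move=> fg; apply/seteqP; split => // w [/CylP Hf /CylP Hg].
move/negP: fg; apply; apply/eqP/ffunP => t; by rewrite -Hf -Hg.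
Qed.

Lemma Cyl_IP N f y :
  P (@Cyl N f `&` (I N @^-1` [set y])) =
  ((\prod_(t <- iota 0 N) pi t (ext f t)) * pi N y)%:E.
Proof.
pose k t := if t == N then y else ext f t.
have -> : @Cyl N f `&` (I N @^-1` [set y]) =
   \bigcap_(t in [set` iota 0 N.+1]) (I t @^-1` [set k t]).
  apply/seteqP; split => w.
    move=> [Hc Hy] t /memI; rewrite ltnS leq_eqVlt => /orP[/eqP ->|tN].
      by rewrite /k eqxx.
    rewrite /k (ltn_eqF tN); apply: Hc; exact: Imem.
  move=> H; split.
    move=> t /memI tN.
    have := H t; rewrite /k (ltn_eqF tN); apply; apply: Imem; exact: ltnW.
  have := H N; rewrite /k eqxx; apply; exact: Imem.
rewrite hI_indep ?iota_uniq //.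
rewrite -addn1 iotaD big_cat big_seq1 /= add0n /k eqxx.
congr ((_ * _)%:E); apply: eq_big_seq => t; rewrite mem_iota /= add0n => tN.
by rewrite (ltn_eqF tN).
Qed.

Lemma disj_big (X : eqType) (F : X -> set T) (x : X) (r : seq X) :
  (forall x y, x != y -> F x `&` F y = set0) -> x \notin r ->
  F x `&` \big[setU/set0]_(y <- r) F y = set0.
Proof.
move=> D; elim: r => [|y r IH]; first by rewrite big_nil setI0.
rewrite in_cons negb_or => /andP[xy xr].
by rewrite big_cons setIUr D // IH // setU0.
Qed.

Lemma meas_seq (X : eqType) (r : seq X) (F : X -> set T) : uniq r ->
  (forall x, measurable (F x)) -> (forall x y, x != y -> F x `&` F y = set0) ->
  P (\big[setU/set0]_(x <- r) F x) = \sum_(x <- r) P (F x).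
Proof.
move=> + mF D; elim: r => [|x r IH]; first by rewrite !big_nil measure0.
move=> /= /andP[xr ur].
rewrite !big_cons measureU //; first by congr (_ + _); exact: (IH ur).
  by apply: bigsetU_measurable.
exact: disj_big.
Qed.

Lemma cover N (B : set T) :
  B = \big[setU/set0]_(f <- enum {ffun 'I_N -> 'I_m}) (@Cyl N f `&` B).
Proof.
rewrite -bigcup_seq; apply/seteqP; split => w.
  move=> Bw; exists [ffun t : 'I_N => I t w]; last by split => //; exact: Cyl_self.
  by rewrite /= mem_enum.
by move=> [f _ []].
Qed.

Lemma partition N (A : set T) : measurable A ->
  P A = \sum_(f <- enum {ffun 'I_N -> 'I_m}) P (@Cyl N f `&` A).
Proof.
move=> mA; rewrite {1}(cover N A) meas_seq ?enum_uniq //.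
  by move=> f; apply: measurableI => //; exact: Cyl_meas.
move=> f g fg; apply/seteqP; split => // w [[Hf _] [Hg _]].
by rewrite -(Cyl_disj fg); split.
Qed.

Definition det N (B : set T) :=
  forall w w', (forall t, (t < N)%N -> I t w = I t w') -> B w -> B w'.

Lemma cyl_case N (B : set T) f : det N B ->
  @Cyl N f `&` B = set0 \/ exists w0, [/\ B w0, @Cyl N f w0 & @Cyl N f `&` B = @Cyl N f].
Proof.
move=> dB; case: (pselect (exists w0, B w0 /\ @Cyl N f w0)) => [[w0 [Bw0 Cw0]]|H].
  right; exists w0; split => //; apply/seteqP; split => w; first by case.
  move=> Cw; split; first exact: Cw.
  by apply: dB Bw0 => t tN; exact: Cyl_hist Cw0 Cw t tN.
left; apply/seteqP; split => // w [Cw Bw]; apply: H; by exists w.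
Qed.

Lemma det_meas N (B : set T) : det N B -> measurable B.
Proof.
move=> dB; rewrite (cover N B); apply: bigsetU_measurable => f _.
case: (cyl_case f dB) => [->|[w0 [_ _ ->]]] //; exact: Cyl_meas.
Qed.

Lemma pmin_le1 : pmin <= 1.
Proof.
apply: le_trans (hpi_min 0 i0) _.
rewrite -(hpi_sum 0) (bigD1 i0) //= lerDl; apply: sumr_ge0 => i _.
exact: le_trans (ltW hpmin) (hpi_min 0 i).
Qed.

Lemma KL N (B : set T) (h : T -> 'I_m) : det N B ->
  (forall w w', (forall t, (t < N)%N -> I t w = I t w') -> h w = h w') ->
  (P (B `&` [set w | I N w != h w]) <= (1 - pmin)%:E * P B)%E.
Proof.
move=> dB dh.
have dX : det N.+1 (B `&` [set w | I N w != h w]).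
  move=> w w' H [Bw Hw]; split.
    by apply: dB Bw => t tN; apply: H; exact: ltnW.
  by rewrite /= -(H N (ltnSn N)) -(dh w w') // => t tN; apply: H; exact: ltnW.
rewrite (partition N (det_meas dX)) (partition N (det_meas dB)).
rewrite ge0_sume_distrr; last by move=> f _; exact: measure_ge0.
apply: lee_sum => f _.
have p1 : 0 <= 1 - pmin by have := pmin_le1; lra.
case: (cyl_case f dB) => [E|[w0 [Bw0 Cw0 E]]].
  have -> : @Cyl N f `&` (B `&` [set w | I N w != h w]) = set0.
    apply/seteqP; split => // w [Cw [Bw _]]; by rewrite -E.
  by rewrite E measure0 mule0.
have -> : @Cyl N f `&` (B `&` [set w | I N w != h w]) =
     @Cyl N f `\` (I N @^-1` [set h w0]).
  apply/seteqP; split => w.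
    move=> [Cw [Bw Hw]]; split => //= Hy; move/eqP: Hw; apply.
    by rewrite Hy; apply: dh => t tN; apply: Cyl_hist Cw0 Cw t tN.
  move=> [Cw Hy]; have : (@Cyl N f `&` B) w by rewrite E.
  move=> [_ Bw]; split => //; split => //=; apply/eqP => Hw; apply: Hy => /=.
  by rewrite Hw; apply: dh => t tN; apply: Cyl_hist Cw Cw0 t tN.
have e3 : P (@Cyl N f `\` (I N @^-1` [set h w0])) =
    (P (@Cyl N f) - P (@Cyl N f `&` (I N @^-1` [set h w0])))%E.
  apply: measureD => //; first exact: Cyl_meas.
  by apply: le_lt_trans (probability_le1 P (Cyl_meas f)) _; rewrite ltry.
rewrite E e3.
rewrite Cyl_IP Cyl_P -EFinM -EFinB lee_fin.
set Pi := \prod_(t <- iota 0 N) pi t (ext f t).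
have Pi0 : 0 <= Pi.
  by apply: prodr_ge0 => t _; apply: le_trans (ltW hpmin) (hpi_min _ _).
have := ler_wpM2l Pi0 (hpi_min N (h w0)); nra.
Qed.

End Prob.

Section Main.
Variables (R : realType) (m n : nat) (hm : (0 < m)%N) (hn : (0 < n)%N)
  (c : 'I_m -> R) (d : 'I_n -> R) (rmax rmin : R)
  (hc : forall i, 0 < c i) (hd : forall j, 0 < d j)
  (hrmin : 0 < rmin) (hr : rmin < rmax)
  (alpha : R) (halpha0 : 0 < alpha) (halpha1 : alpha <= 1)
  (pmin : R) (hpmin : 0 < pmin) (pi : nat -> 'I_m -> R)
  (hpi_min : forall t i, pmin <= pi t i)
  (hpi_sum : forall t, \sum_(i < m) pi t i = 1)
  (dT : measure_display) (T : measurableType dT) (P : probability T R)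
  (I : nat -> T -> 'I_m)
  (hI_meas : forall t k, measurable (I t @^-1` [set k]))
  (hI_indep : forall (ts : seq nat) (k : nat -> 'I_m), uniq ts ->
     P (\bigcap_(t in [set` ts]) (I t @^-1` [set k t])) =
     (\prod_(t <- ts) pi t (k t))%:E)
  (s1 : 'M[R]_(m, n)) (hs1 : in_profile c s1)
  (s : nat -> T -> 'M[R]_(m, n))
  (hs_init : forall w, s 0%N w = s1)
  (hs_step : forall t w, exists shat : 'I_n -> R,
     is_best_response c d rmax rmin (I t w) (s t w) shat /\
     s t.+1 w = alpha_update alpha (s t w) (I t w) shat)
  (sstar : 'M[R]_(m, n)) (hstar : is_pure_NE c d rmax rmin sstar).

Let i0 : 'I_m := Ordinal hm.

Definition gp (x : 'M[R]_(m, n)) : 'I_m :=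
  [arg max_(i > i0) GL d rmax rmin x i (fun j => sstar i j - x i j)]%O.

Lemma hgp x : \sum_(k < m) GL d rmax rmin x k (fun j => sstar k j - x k j) <=
   m%:R * GL d rmax rmin x (gp x) (fun j => sstar (gp x) j - x (gp x) j).
Proof.
have Hk : forall k, GL d rmax rmin x k (fun j => sstar k j - x k j) <=
    GL d rmax rmin x (gp x) (fun j => sstar (gp x) j - x (gp x) j).
  move=> k; rewrite /gp; case: arg_maxP => //= i _ Hi; exact: Hi.
apply: le_trans (ler_sum _ (fun k _ => Hk k)) _.
by rewrite sumr_const card_ord mulr_natl.
Qed.

Lemma s_det t w w' : (forall k, (k < t)%N -> I k w = I k w') -> s t w = s t w'.
Proof.
elim: t => [|t IH] H; first by rewrite !hs_init.
have [sh1 [B1 E1]] := hs_step t w.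
have [sh2 [B2 E2]] := hs_step t w'.
have It : I t w = I t w' := H t (ltnSn t).
have St : s t w = s t w' by apply: IH => k kt; apply: H; exact: ltnW.
rewrite E1 E2 -It -St; rewrite -It -St in B2.
by rewrite (br_unique hd hr B1 B2).
Qed.

Definition Bad N L := [set w | forall t, (N <= t)%N -> (t < N + L)%N -> I t w != gp (s t w)].

Lemma Bad_det N L : det I (N + L) (Bad N L).
Proof.
move=> w w' H Bw t Nt tL.
rewrite -(H t tL) -(s_det (w := w)) ?Bw // => k kt.
by apply: H; exact: ltn_trans kt tL.
Qed.

Lemma Bad_succ N L : Bad N L.+1 = Bad N L `&` [set w | I (N + L) w != gp (s (N + L) w)].
Proof.
apply/seteqP; split => w.
  move=> H; split.
    by move=> t Nt tL; apply: H => //; rewrite addnS ltnS ltnW.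
  by apply: H; [exact: leq_addr | rewrite addnS ltnS].
move=> [H1 H2] t Nt; rewrite addnS ltnS leq_eqVlt => /orP[/eqP ->|tL] //.
exact: H1.
Qed.

Lemma q1 : 0 <= 1 - pmin.
Proof. have := pmin_le1 hm hpmin hpi_min hpi_sum; lra. Qed.

Lemma Bad_bound N L : (P (Bad N L) <= ((1 - pmin) ^+ L)%:E)%E.
Proof.
elim: L => [|L IH].
  rewrite expr0; apply: probability_le1; exact: (det_meas hm hI_meas (@Bad_det N 0)).
rewrite Bad_succ.
apply: le_trans (KL hm hpmin hpi_min hpi_sum hI_meas hI_indep (@Bad_det N L) _) _.
  by move=> w w' H; congr gp; apply: s_det.
rewrite exprS EFinM; apply: lee_wpmul2l => //; rewrite lee_fin; exact: q1.
Qed.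

Definition Nul := \bigcup_N \bigcap_L Bad N L.

Lemma Nul_neg : P.-negligible Nul.
Proof.
apply: negligible_bigcup => N.
have mB : forall L, measurable (Bad N L) by move=> L; exact: (det_meas hm hI_meas (@Bad_det N L)).
apply/negligibleP; first exact: bigcapT_measurable.
apply/eqP; rewrite -measure_le0; apply/lee_addgt0Pr => e e0; rewrite add0e.
have hp := hpmin.
have hq : `|1 - pmin| < 1 by rewrite ger0_norm ?q1 //; lra.
have := cvg_expr hq; move/cvgrPdist_lt => /(_ e e0) [L _ HL].
have := HL L (leqnn L); rewrite /= sub0r normrN ger0_norm ?exprn_ge0 ?q1 // => Le.
have h1 : (P (\bigcap_L Bad N L) <= P (Bad N L))%E.
  apply: le_measure; rewrite ?inE //; first exact: bigcapT_measurable.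
  exact: bigcap_inf.
have h2 := Bad_bound N L.
have h3 : (((1 - pmin) ^+ L)%:E <= e%:E)%E by rewrite lee_fin ltW.
exact: (le_trans h1 (le_trans h2 h3)).
Qed.

Lemma main_ae : {ae P, forall w, (fun t => s t w) @ \oo --> sstar}.
Proof.
rewrite nearE /almost_everywhere.
apply: negligibleS Nul_neg => w /= Hw.
case: (pselect (Nul w)) => // HN; exfalso; apply: Hw.
apply: (det_conv hm hd hr halpha0 halpha1 hstar (ii := fun t => I t w) (gp := gp)).
- by rewrite hs_init.
- by move=> t; exact: hs_step t w.
- exact: hgp.
move=> N0; apply: contrapT => Hn; apply: HN; exists N0 => // L _ t Nt tL.
by apply/eqP => E; apply: Hn; exists t; split.
Qed.

End Main.

Unset Implicit Arguments.
Set Strict Implicit.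

Theorem theorem4p4
  (R : realType) (m n : nat) (hm : (0 < m)%N) (hn : (0 < n)%N)
  (c : 'I_m -> R) (d : 'I_n -> R) (rmax rmin : R)
  (hc : forall i, 0 < c i) (hd : forall j, 0 < d j)
  (hrmin : 0 < rmin) (hr : rmin < rmax)
  (alpha : R) (halpha0 : 0 < alpha) (halpha1 : alpha <= 1)
  (pmin : R) (hpmin : 0 < pmin) (pi : nat -> 'I_m -> R)
  (hpi_min : forall t i, pmin <= pi t i)
  (hpi_sum : forall t, \sum_(i < m) pi t i = 1)
  (dT : measure_display) (T : measurableType dT) (P : probability T R)
  (I : nat -> T -> 'I_m)
  (hI_meas : forall t k, measurable (I t @^-1` [set k]))
  (hI_indep : forall (ts : seq nat) (k : nat -> 'I_m), uniq ts ->
     P (\bigcap_(t in [set` ts]) (I t @^-1` [set k t])) =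
     (\prod_(t <- ts) pi t (k t))%:E)
  (s1 : 'M[R]_(m, n)) (hs1 : in_profile c s1)
  (s : nat -> T -> 'M[R]_(m, n))
  (hs_init : forall w, s 0%N w = s1)
  (hs_step : forall t w, exists shat : 'I_n -> R,
     is_best_response c d rmax rmin (I t w) (s t w) shat /\
     s t.+1 w = alpha_update alpha (s t w) (I t w) shat)
  (sstar : 'M[R]_(m, n)) (hstar : is_pure_NE c d rmax rmin sstar) :
  {ae P, forall w, (fun t => s t w) @ \oo --> sstar}.
Proof.
exact: (main_ae hm hd hr halpha0 halpha1 hpmin hpi_min hpi_sum hI_meas hI_indep hs1 hs_init hs_step hstar).
Qed.
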